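(* Let $G$ be an undirected unweighted graph on $n$ vertices with minimum cut value $c\geq 1$, and fix a minimum cut $C$ of $G$. If Karger's contraction process is run on $G$ until there are at most $cn$ edges remaining in the (contracted) graph, then $C$ survives with at least a constant probability (bounded below by an absolute constant independent of $G$).
   Context: Karger's contraction process: repeatedly choose a uniformly random edge of the current multigraph and contract its two endpoints into a single super-vertex, keeping parallel edges and removing self-loops. Each super-vertex corresponds to a set of original vertices. A cut $C$ of $G$ (the set of edges between $S$ and $V\setminus S$) survives if none of its edges has been contracted, i.e. every super-vertex is contained in $S$ or in $V\setminus S$. The minimum cut value is $\min_{\emptyset\ne S\subsetneq V}$ of the number of edges between $S$ and $V\setminus S$. *)

(* Defs.v *)
From mathcomp Require Import all_boot all_order all_algebra.
Set Implicit Arguments. Unset Strict Implicit. Unset Printing Implicit Defensive.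
Import Order.TTheory GRing.Theory Num.Theory.

Section Karger.
Variable T : finType.

Definition simple_graph (E : {set {set T}}) : Prop :=
  forall x, x \in E -> #|x| = 2.

Definition cut_edges (E : {set {set T}}) (S : {set T}) : {set {set T}} :=
  [set x in E | #|x :&: S| == 1%N].

Definition proper_nonempty (S : {set T}) : bool := (S != set0) && (S != setT).

Definition is_min_cut_value (E : {set {set T}}) (c : nat) : Prop :=
  (exists2 S, proper_nonempty S & #|cut_edges E S| = c) /\
  (forall S, proper_nonempty S -> c <= #|cut_edges E S|)%N.

(* A state of the contraction process is the partition P of T into
   super-vertices.  The edges of the contracted multigraph (parallel edges
   kept, self-loops removed) are exactly the original edges not contained in
   a single super-vertex. *)
Definition remaining (E : {set {set T}}) (P : {set {set T}}) : {set {set T}} :=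
  [set x in E | ~~ [exists B in P, x \subset B]].

Definition contract (P : {set {set T}}) (x : {set T}) : {set {set T}} :=
  [set B in P | [disjoint B & x]] :|:
  [set \bigcup_(B in P | ~~ [disjoint B & x]) B].

Definition initial_partition : {set {set T}} := [set [set v] | v : T].

Definition survives (S : {set T}) (P : {set {set T}}) : bool :=
  [forall B in P, (B \subset S) || (B \subset ~: S)].

(* Probability that the cut of S survives when the process, started in state P,
   is run until at most m edges remain; each step contracts a uniformly random
   remaining edge.  fuel bounds the number of steps (#|T| suffices, since each
   contraction decreases the number of super-vertices and with a single
   super-vertex no edge remains). *)
Fixpoint surv_prob (E : {set {set T}}) (S : {set T}) (m : nat)
    (fuel : nat) (P : {set {set T}}) : rat :=
  if (#|remaining E P| <= m)%N then ((survives S P)%:R)%R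
  else match fuel with
       | 0 => ((survives S P)%:R)%R
       | k.+1 => ((\sum_(x in remaining E P) surv_prob E S m k (contract P x))
                  / #|remaining E P|%:R)%R
       end.

Definition karger_survival (E : {set {set T}}) (S : {set T}) (m : nat) : rat :=
  surv_prob E S m #|T| initial_partition.

End Karger.

(* Main.v *)
Require Import Defs.
From mathcomp Require Import all_boot all_order all_algebra.
From mathcomp Require Import zify ring lra.
Import Order.TTheory GRing.Theory Num.Theory.
Local Open Scope ring_scope.

Section S.
Variable T : finType.

Lemma survivesC (S : {set T}) P : survives (~: S) P = survives S P.
Proof.
by apply/forallP/forallP => h B; move: (h B); rewrite setCK orbC.
Qed.

Lemma surv_contract_sub (S : {set T}) P (x : {set T}) :
  survives S P -> x \subset S -> survives S (contract P x).
Proof.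
move=> /forallP sv xS; apply/forallP => B; apply/implyP.
rewrite /contract in_setU in_set1 => /orP[|/eqP->].
  by rewrite inE => /andP[BP _]; exact: (implyP (sv B) BP).
apply/orP; left; apply/bigcupsP => B' /andP[B'P nd].
case/orP: (implyP (sv B') B'P) => // B'C.
exfalso; move: nd; rewrite disjoint_subset => /negP; apply.
apply: subset_trans B'C _; apply/subsetP => v; rewrite !inE => vS; apply/negP => vx; by move: vS; rewrite (subsetP xS v vx).
Qed.

Lemma surv_contract (S : {set T}) P (x : {set T}) :
  #|x| = 2%N -> #|x :&: S| != 1%N -> survives S P -> survives S (contract P x).
Proof.
move=> x2 n1 sv.
have := cardsID S x; rewrite x2 => e.
have : (#|x :&: S| == 0%N) || (#|x :&: S| == 2%N) by lia.
case/orP => /eqP h.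
- rewrite -survivesC; apply: surv_contract_sub; first by rewrite survivesC.
  apply/subsetP => v vx; rewrite inE; apply/negP => vS.
  by move: h => /eqP; rewrite cards_eq0 => /eqP/setP/(_ v); rewrite !inE vx vS.
- apply: surv_contract_sub => //.
  have : x :&: S = x by apply/eqP; rewrite eqEcard subsetIl h x2 leqnn.
  by move=> <-; apply: subsetIr.
Qed.

Variables (E : {set {set T}}) (S : {set T}) (c : nat).
Hypothesis sg : simple_graph E.
Hypothesis cutc : #|cut_edges E S| = c.

Lemma surv_ge0 m k P : 0 <= surv_prob E S m k P.
Proof.
elim: k P => [|k IH] P /=; case: ifP => _ //.
by apply: divr_ge0 => //; apply: sumr_ge0.
Qed.

Let n := #|T|.
Let a : rat := 1 - 1 / n%:R.

Hypothesis npos : (0 < n)%N.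

Lemma a_ge0 : 0 <= a.
Proof.
rewrite /a subr_ge0 mul1r invf_le1 ?ler1n ?ltr0n //.
Qed.

Lemma main_ind k P : survives S P -> a ^+ k <= surv_prob E S (c * n) k P.
Proof.
elim: k P => [|k IH] P sv /=.
  by case: ifP => _; rewrite sv expr0.
case: ifP => hrem.
  rewrite sv; apply: exprn_ile1; first exact: a_ge0.
  by rewrite /a lerBlDr lerDl mul1r invr_ge0.
set R := remaining E P.
have Rgt : (c * n < #|R|)%N by rewrite ltnNge hrem.
pose K := cut_edges E S.
rewrite (bigID (fun x => x \in K)) /=.
have s1 : 0 <= \sum_(i in R | i \in K) surv_prob E S (c * n) k (contract P i).
  by apply: sumr_ge0 => *; apply: surv_ge0.
have s2 : a ^+ k *+ #|R :\: K| <= \sum_(i in R | i \notin K) surv_prob E S (c * n) k (contract P i).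
  rewrite -sumr_const.
  rewrite [X in _ <= X](eq_bigl (fun i => i \in R :\: K)); last first.
    by move=> i; rewrite in_setD andbC.
  apply: ler_sum => i /setDP [iR iK]; apply: IH.
  have iE : i \in E by move: iR; rewrite inE => /andP[].
  apply: surv_contract => //; first exact: sg.
  by move: iK; rewrite inE iE.
have cardD : (#|R| <= #|R :\: K| + c)%N.
  rewrite cardsD -cutc -/K; have := subset_leq_card (subsetIr R K); lia.
have Rpos : (0 < #|R|)%N by lia.
have Rr : 0 < #|R|%:R :> rat by rewrite ltr0n.
rewrite ler_pdivlMr //.
set sm := \sum_(i in R | i \in K) _ .
set sm2 := \sum_(i in R | i \notin K) _ .
have ak : 0 <= a ^+ k by rewrite exprn_ge0 // a_ge0.
have cardD' : #|R|%:R <= #|R :\: K|%:R + c%:R :> rat by rewrite -natrD ler_nat.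
have Rgt' : c%:R * n%:R <= #|R|%:R :> rat by rewrite -natrM ler_nat ltnW.
have nr : 0 < n%:R :> rat by rewrite ltr0n.
have ha : a * n%:R = n%:R - 1 by rewrite /a mulrBl mul1r mul1r mulVf ?gt_eqF.
rewrite -mulr_natr in s2.
rewrite exprSr.
have key : a * #|R|%:R <= #|R|%:R - c%:R.
  have : a * #|R|%:R * n%:R <= (#|R|%:R - c%:R) * n%:R.
    rewrite -mulrA [#|R|%:R * _]mulrC mulrA ha. nra.
  by rewrite ler_pM2r.
have : a ^+ k * (a * #|R|%:R) <= a ^+ k * (#|R :\: K|%:R).
  apply: ler_wpM2l => //; lra.
rewrite mulrA => h; apply: le_trans h _; rewrite -[X in X <= _]add0r; exact: lerD.
Qed.

End S.

Lemma bern (x : rat) (k : nat) : 0 <= x -> x <= 1 -> 1 - k%:R * x <= (1 - x) ^+ k.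
Proof.
move=> x0 x1; elim: k => [|k IH]; first by rewrite expr0 mul0r subr0.
rewrite exprSr -natr1.
have h : (1 - k%:R * x) * (1 - x) <= (1 - x) ^+ k * (1 - x).
  by rewrite ler_wpM2r // subr_ge0.
have k0 : 0 <= k%:R :> rat by [].
nra.
Qed.

Lemma final (n : nat) : (2 <= n)%N -> 1/6 <= (1 - 1/n%:R : rat) ^+ n.
Proof.
move=> n2.
set j := n./2.
have hj1 : (2 * j <= n)%N by rewrite /j; rewrite -{2}(odd_double_half n); rewrite mul2n; lia.
have hj2 : (n <= 3 * j)%N.
  have := odd_double_half n; rewrite -/j -mul2n => e. case: (odd n) e => /= e; lia.
have -> : n = (j + (n - j))%N by lia.
rewrite exprD.
set y := 1 / (j + (n - j))%:R : rat.
have npos : (0 < (j + (n - j))%:R :> rat) by rewrite ltr0n; lia.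
have hy : (j + (n - j))%:R * y = 1 by rewrite /y mul1r mulfV // gt_eqF.
have y0 : 0 <= y by rewrite /y mul1r invr_ge0 ltW.
have y1 : y <= 1.
  rewrite /y mul1r invf_le1 //; rewrite ler1n; lia.
have b1 := @bern y j y0 y1.
have b2 := @bern y (n - j) y0 y1.
have hj1' : 2 * j%:R <= (j + (n - j))%:R :> rat by rewrite -natrM ler_nat; lia.
have hj2' : (j + (n-j))%:R <= 3 * j%:R :> rat by rewrite -natrM ler_nat; lia.
have e : (j + (n - j))%:R = j%:R + (n-j)%:R :> rat by rewrite natrD.
rewrite e in hy hj1' hj2'.
have c1 : 1/2 <= 1 - j%:R * y.
  have : 2 * j%:R * y <= 1 by nra. lra.
have c2 : 1/3 <= 1 - (n-j)%:R * y.
  have : 3 * j%:R * y >= 1 by nra. lra.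
have p1 : 1/2 <= (1 - y) ^+ j by lra.
have p2 : 1/3 <= (1 - y) ^+ (n - j) by lra.
nra.
Qed.

Theorem mainTheorem5 :
  exists delta : rat, (0 < delta)%R /\
  forall (T : finType) (E : {set {set T}}) (c : nat) (S : {set T}),
    simple_graph E ->
    is_min_cut_value E c ->
    (1 <= c)%N ->
    proper_nonempty S ->
    #|cut_edges E S| = c ->
    (delta <= karger_survival E S (c * #|T|))%R.
Proof.
exists (1/6); split => //.
move=> T E c S sg _ c1 /andP[S0 ST] cutc.
have n2 : (2 <= #|T|)%N.
  have h1 : (0 < #|S|)%N by rewrite card_gt0.
  have h2 : (#|S| < #|T|)%N by rewrite -cardsT; apply: proper_card; rewrite properT.
  lia.
apply: (le_trans (final _ n2)); rewrite /karger_survival.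
apply: main_ind => //; first lia.
apply/forallP => B; apply/implyP => /imsetP [v _ ->].
case: (boolP (v \in S)) => vS; apply/orP; [left|right]; rewrite sub1set //.
by rewrite inE.
Qed.
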